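(* Let $\lambda,\lambda_1,\sigma,\sigma_1\in\mathbb{C}^*$ and $\eta,\eta_1\in\mathbb{C}$, and let $R$ and $S$ be irreducible restricted $\mathcal{G}$-modules. Then: (1) $\Omega(\lambda,\eta,\sigma,0)\otimes R\cong\Omega(\lambda_1,\eta_1,\sigma_1,0)\otimes S$ as $\mathcal{G}$-modules if and only if $\lambda=\lambda_1$, $\eta=\eta_1$, $\sigma=\sigma_1$ and $R\cong S$; (2) $\Omega(\lambda,\eta,0,\sigma)\otimes R\cong\Omega(\lambda_1,\eta_1,0,\sigma_1)\otimes S$ if and only if $\lambda=\lambda_1$, $\eta=\eta_1$, $\sigma=\sigma_1$ and $R\cong S$; (3) $\Omega(\lambda,\eta,\sigma,0)\otimes R$ and $\Omega(\lambda_1,\eta_1,0,\sigma_1)\otimes S$ are not isomorphic.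
   Context: $\mathcal{G}$ is the complex Lie algebra with basis $\{L_n,H_n,I_n,J_n,\mathbf{c}_1,\mathbf{c}_2,\mathbf{c}_3: n\in\mathbb{Z}\}$ whose brackets of basis elements are $[L_m,L_n]=(n-m)L_{m+n}+\frac{m^3-m}{12}\delta_{m+n,0}\mathbf{c}_1$, $[L_m,H_n]=nH_{m+n}+m^2\delta_{m+n,0}\mathbf{c}_2$, $[H_m,H_n]=m\delta_{m+n,0}\mathbf{c}_3$, $[L_m,I_n]=(n-m)I_{m+n}$, $[L_m,J_n]=(n-m)J_{m+n}$, $[H_m,I_n]=I_{m+n}$, $[H_m,J_n]=-J_{m+n}$ (and antisymmetric counterparts), all other brackets of basis elements zero. $\mathcal{G}=\bigoplus_{i\in\mathbb{Z}}\mathcal{G}^i$ is $\mathbb{Z}$-graded with $\mathcal{G}^i$ spanned by $L_i,H_i,I_i,J_i$ (and also $\mathbf{c}_1,\mathbf{c}_2,\mathbf{c}_3$ when $i=0$). A $\mathcal{G}$-module $R$ is restricted if for every $v\in R$ there is $N\in\mathbb{N}$ with $\mathcal{G}^iv=0$ for all $i>N$. For $\lambda\in\mathbb{C}^*,\eta\in\mathbb{C}$, $\sigma\in\mathbb{C}^*$: $\Omega(\lambda,\eta,\sigma,0)$ is $\mathbb{C}[X,Y]$ with $L_mf(X,Y)=\lambda^mf(X,Y-m)(Y-mX+m\eta)$, $H_mf=\lambda^mXf(X,Y-m)$, $I_mf=\lambda^m\sigma f(X-1,Y-m)$, and $J_m,\mathbf{c}_1,\mathbf{c}_2,\mathbf{c}_3$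 acting as $0$; $\Omega(\lambda,\eta,0,\sigma)$ is $\mathbb{C}[X,Y]$ with $L_mf=\lambda^mf(X,Y-m)(Y+mX+m\eta)$, $H_mf=\lambda^mXf(X,Y-m)$, $J_mf=\lambda^m\sigma f(X+1,Y-m)$, and $I_m,\mathbf{c}_1,\mathbf{c}_2,\mathbf{c}_3$ acting as $0$ ($m\in\mathbb{Z}$). Tensor products carry the action $x(u\otimes v)=xu\otimes v+u\otimes xv$. *)

(* Defs.v *)
From HB Require Import structures.
From mathcomp Require Import all_boot all_order all_algebra.
From mathcomp Require Import Rstruct complex.
From mathcomp Require Import mpoly.
Import GRing.Theory.
Set Implicit Arguments. Unset Strict Implicit. Unset Printing Implicit Defensive.
Local Open Scope ring_scope.

Definition CC : numClosedFieldType := (Rdefinitions.R)[i].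

Inductive gbasis : Type :=
  | gL of int | gH of int | gI of int | gJ of int | gc1 | gc2 | gc3.

Definition gdeg (x : gbasis) : int :=
  match x with gL n | gH n | gI n | gJ n => n | _ => 0 end.

Definition kdelta (a : int) : CC := if a == 0 then 1 else 0.

(* [x, y] for basis elements x y, as a finite formal linear combination. *)
Definition brk (x y : gbasis) : seq (CC * gbasis) :=
  match x, y with
  | gL m, gL n => [:: ((n - m)%:~R, gL (m + n));
                      (((m * m * m - m)%:~R / 12%:R) * kdelta (m + n), gc1)]
  | gL m, gH n => [:: (n%:~R, gH (m + n)); ((m * m)%:~R * kdelta (m + n), gc2)]
  | gH n, gL m => [:: (- n%:~R, gH (m + n)); (- ((m * m)%:~R * kdelta (m + n)), gc2)]
  | gH m, gH n => [:: (m%:~R * kdelta (m + n), gc3)]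
  | gL m, gI n => [:: ((n - m)%:~R, gI (m + n))]
  | gI n, gL m => [:: (- (n - m)%:~R, gI (m + n))]
  | gL m, gJ n => [:: ((n - m)%:~R, gJ (m + n))]
  | gJ n, gL m => [:: (- (n - m)%:~R, gJ (m + n))]
  | gH m, gI n => [:: (1, gI (m + n))]
  | gI n, gH m => [:: (-1, gI (m + n))]
  | gH m, gJ n => [:: (-1, gJ (m + n))]
  | gJ n, gH m => [:: (1, gJ (m + n))]
  | _, _ => [::]
  end.

(* A G-module: a complex vector space V with linear operators for the basis
   elements satisfying the bracket relations (this is exactly a Lie algebra
   homomorphism G -> gl(V), written on the basis). *)
Record gmod (V : lmodType CC) := GMod {
  gact : gbasis -> V -> V;
  gact_linear : forall x, linear (gact x);
  gact_bracket : forall x y v,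
    gact x (gact y v) - gact y (gact x v) = \sum_(p <- brk x y) p.1 *: gact p.2 v
}.

Definition restricted (V : lmodType CC) (M : gmod V) : Prop :=
  forall v : V, exists N : nat, forall x, (N%:Z < gdeg x)%R -> gact M x v = 0.

Definition gsubmodule (V : lmodType CC) (M : gmod V) (P : V -> Prop) : Prop :=
  [/\ P 0, (forall u v, P u -> P v -> P (u + v)),
      (forall (k : CC) v, P v -> P (k *: v)) &
      (forall x v, P v -> P (gact M x v))].

Definition irreducible (V : lmodType CC) (M : gmod V) : Prop :=
  (exists v : V, v != 0) /\
  forall P : V -> Prop, gsubmodule M P -> (forall v, P v -> v = 0) \/ (forall v, P v).

Definition gmod_iso (V W : lmodType CC) (M : gmod V) (N : gmod W) : Prop :=
  exists f : V -> W, [/\ linear f, bijective f &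
                        forall x v, f (gact M x v) = gact N x (f v)].

(* C[X,Y], with X = 'X_0 and Y = 'X_1. *)
Definition CXY := {mpoly CC[2]}.

Definition shiftXY (a b : CC) (f : CXY) : CXY :=
  f \mPo [tuple ('X_0 : CXY) + a%:MP; ('X_1 : CXY) + b%:MP].

(* Omega(lam, eta, sig, 0) *)
Definition omegaI (lam eta sig : CC) (x : gbasis) (f : CXY) : CXY :=
  match x with
  | gL m => lam ^ m *: (shiftXY 0 (- m%:~R) f *
                 ('X_1 - (m%:~R : CC) *: 'X_0 + ((m%:~R : CC) * eta)%:MP))
  | gH m => lam ^ m *: ('X_0 * shiftXY 0 (- m%:~R) f)
  | gI m => lam ^ m *: (sig *: shiftXY (-1) (- m%:~R) f)
  | _ => 0
  end.

(* Omega(lam, eta, 0, sig) *)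
Definition omegaJ (lam eta sig : CC) (x : gbasis) (f : CXY) : CXY :=
  match x with
  | gL m => lam ^ m *: (shiftXY 0 (- m%:~R) f *
                 ('X_1 + (m%:~R : CC) *: 'X_0 + ((m%:~R : CC) * eta)%:MP))
  | gH m => lam ^ m *: ('X_0 * shiftXY 0 (- m%:~R) f)
  | gJ m => lam ^ m *: (sig *: shiftXY 1 (- m%:~R) f)
  | _ => 0
  end.

Definition bilinearP (A B W : lmodType CC) (b : A -> B -> W) : Prop :=
  (forall a, linear (b a)) /\ (forall v, linear (fun a => b a v)).

Definition is_tensor (A B T : lmodType CC) (t : A -> B -> T) : Prop :=
  bilinearP t /\
  forall (W : lmodType CC) (b : A -> B -> W), bilinearP b ->
    exists phi : T -> W,
      [/\ linear phi, (forall a v, phi (t a v) = b a v) &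
          forall psi : T -> W, linear psi ->
            (forall a v, psi (t a v) = b a v) -> psi =1 phi].

Definition tensor_gmod (A B T : lmodType CC) (actA : gbasis -> A -> A)
    (MB : gmod B) (MT : gmod T) (t : A -> B -> T) : Prop :=
  is_tensor t /\
  forall x a v, gact MT x (t a v) = t (actA x a) v + t a (gact MB x v).

(* Main.v *)
Require Import Defs.
From HB Require Import structures.
From mathcomp Require Import all_boot all_order all_algebra.
From mathcomp Require Import Rstruct complex.
From mathcomp Require Import mpoly.
From Stdlib Require Import ClassicalDescription Classical.
From mathcomp Require Import ring.
From Stdlib Require Import IndefiniteDescription.
Import Order.TTheory GRing.Theory Num.Theory.
Set Implicit Arguments. Unset Strict Implicit. Unset Printing Implicit Defensive.
Local Open Scope ring_scope.
Section LinHelp.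
Variables (U W : lmodType CC) (f : U -> W).
Hypothesis lf : linear f.
Lemma lin0 : f 0 = 0.
Proof. have := lf (-1) 0 0; rewrite scaler0 addr0 => ->; by rewrite scaleN1r addNr. Qed.
Lemma linD x y : f (x + y) = f x + f y.
Proof. by have := lf 1 x y; rewrite !scale1r. Qed.
Lemma linZ k x : f (k *: x) = k *: f x.
Proof. by have := lf k x 0; rewrite !addr0 lin0 addr0. Qed.
Lemma linN x : f (- x) = - f x.
Proof. by rewrite -scaleN1r linZ scaleN1r. Qed.
Lemma linB x y : f (x - y) = f x - f y.
Proof. by rewrite linD linN. Qed.
Lemma lin_sum I (r : seq I) (P : pred I) (F : I -> U) :
  f (\sum_(i <- r | P i) F i) = \sum_(i <- r | P i) f (F i).
Proof. exact: (big_morph f linD lin0). Qed.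
End LinHelp.

Lemma lin_comp (U V W : lmodType CC) (f : V -> W) (g : U -> V) :
  linear f -> linear g -> linear (fun x => f (g x)).
Proof. by move=> lf lg k x y; rewrite lg lf. Qed.

Definition pb {T} (P : T -> Prop) : pred T :=
  fun w => if excluded_middle_informative (P w) then true else false.
Lemma pbP {T} (P : T -> Prop) w : reflect (P w) (pb P w).
Proof. rewrite /pb; case: excluded_middle_informative => h; constructor => //. Qed.

Section Span.
Variables (T : lmodType CC) (G : T -> Prop).
Definition subsp (P : T -> Prop) := [/\ P 0, (forall x y, P x -> P y -> P (x + y))
  & (forall (k : CC) x, P x -> P (k *: x))].
Definition spanP (w : T) : Prop :=
  forall P, subsp P -> (forall g, G g -> P g) -> P w.
Definition pbT : pred T := pb spanP.
Lemma pbT_closed : GRing.subsemimod_closed pbT.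
Proof.
split; first split.
- by apply/pbP => P [].
- move=> x y /pbP hx /pbP hy; apply/pbP => P sP hG; case: (sP) => _ PD _.
  by apply: PD; [apply: hx|apply: hy].
- move=> k x /pbP hx; apply/pbP => P sP hG; case: (sP) => _ _ PZ.
  by apply: PZ; apply: hx.
Qed.
HB.instance Definition _ := GRing.isSubmodClosed.Build CC T pbT pbT_closed.
Definition SubT := {w : T | pbT w}.
HB.instance Definition _ := [isSub of SubT for (@sval T pbT)].
HB.instance Definition _ := [Choice of SubT by <:].
HB.instance Definition _ := [SubChoice_isSubLmodule of SubT by <:].
End Span.

Section Tensor.
Variables (A B T : lmodType CC) (t : A -> B -> T).
Hypothesis tT : is_tensor t.

Lemma t_lin1 v : linear (fun a => t a v).
Proof. by case: tT => [[_ h] _]. Qed.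
Lemma t_lin2 a : linear (t a).
Proof. by case: tT => [[h _] _]. Qed.

Lemma tD1 x y v : t (x + y) v = t x v + t y v. Proof. exact: (linD (t_lin1 v)). Qed.
Lemma tB1 x y v : t (x - y) v = t x v - t y v. Proof. exact: (linB (t_lin1 v)). Qed.
Lemma tZ1 k x v : t (k *: x) v = k *: t x v. Proof. exact: (linZ (t_lin1 v)). Qed.
Lemma t01 v : t 0 v = 0. Proof. exact: (lin0 (t_lin1 v)). Qed.
Lemma tsum1 I (r : seq I) (P : pred I) F v :
  t (\sum_(i <- r | P i) F i) v = \sum_(i <- r | P i) t (F i) v.
Proof. exact: (lin_sum (t_lin1 v)). Qed.
Lemma tD2 a x y : t a (x + y) = t a x + t a y. Proof. exact: (linD (t_lin2 a)). Qed.
Lemma tB2 a x y : t a (x - y) = t a x - t a y. Proof. exact: (linB (t_lin2 a)). Qed.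
Lemma tN2 a x : t a (- x) = - t a x. Proof. exact: (linN (t_lin2 a)). Qed.
Lemma tZ2 a k x : t a (k *: x) = k *: t a x. Proof. exact: (linZ (t_lin2 a)). Qed.
Lemma t02 a : t a 0 = 0. Proof. exact: (lin0 (t_lin2 a)). Qed.
Lemma tsum2 I (r : seq I) (P : pred I) F a :
  t a (\sum_(i <- r | P i) F i) = \sum_(i <- r | P i) t a (F i).
Proof. exact: (lin_sum (t_lin2 a)). Qed.

Lemma tensor_ext (W : lmodType CC) (p1 p2 : T -> W) :
  linear p1 -> linear p2 -> (forall a v, p1 (t a v) = p2 (t a v)) -> p1 =1 p2.
Proof.
move=> l1 l2 e.
have bl : bilinearP (fun a v => p1 (t a v)).
  split=> [a|v]; [exact: lin_comp l1 (t_lin2 a)|exact: lin_comp l1 (t_lin1 v)].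
case: tT => _ /(_ W _ bl) [phi [_ _ U]].
by move=> w; rewrite (U p1 l1 (fun _ _ => erefl)) (U p2 l2 (fun a v => esym (e a v))).
Qed.

Lemma tensor_span (P : T -> Prop) : P 0 -> (forall x y, P x -> P y -> P (x + y)) ->
  (forall k x, P x -> P (k *: x)) -> (forall a v, P (t a v)) -> forall w, P w.
Proof.
move=> P0 PD PZ Pt w.
pose G := fun w : T => exists a v, w = t a v.
have Gt a v : pbT G (t a v).
  by apply/pbP => Q _ HQ; apply: HQ; exists a, v.
pose S := SubT G.
pose b (a : A) (v : B) : S := exist _ (t a v) (Gt a v).
have bl : bilinearP b.
  split=> [a|v] k x y; apply: val_inj => /=;
  by [rewrite (t_lin2 a) | rewrite (t_lin1 v)].
case: tT => _ /(_ S b bl) [phi [lphi phit _]].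
have lv : linear (fun w => val (phi w)).
  by move=> k x y; rewrite lphi /=.
have := @tensor_ext T _ id lv (fun k x y => erefl) (fun a v => congr1 val (phit a v)) w.
move=> <-; move/pbP: (valP (phi w)); apply => //.
by move=> g [a [v ->]].
Qed.

End Tensor.
Definition indep (B : lmodType CC) k (u : 'I_k -> B) :=
  forall c : 'I_k -> CC, \sum_i c i *: u i = 0 -> forall i, c i = 0.

Section TensorPoly.
Variables (B T : lmodType CC) (t : CXY -> B -> T).
Hypothesis tT : is_tensor t.

Lemma coefT_map (al : 'X_{1..2}) :
  exists c : T -> B, linear c /\ forall a v, c (t a v) = a@_al *: v.
Proof.
have bl : bilinearP (fun (a : CXY) (v : B) => a@_al *: v).
  split=> [a|v] k x y /=.
  - by rewrite scalerDr !scalerA mulrC.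
  - by rewrite mcoeffD mcoeffZ scalerDl scalerA.
by case: tT => _ /(_ B _ bl) [phi [lphi phit _]]; exists phi.
Qed.

Lemma t_inj1 (u : B) : t 1 u = 0 -> u = 0.
Proof.
case: (coefT_map 0%MM) => c [lc hc] h.
by have := hc 1 u; rewrite h lin0 // mcoeff1 eqxx scale1r => <-.
Qed.

Lemma indep_zero k (a : 'I_k -> CXY) (u : 'I_k -> B) :
  indep u -> \sum_(i < k) t (a i) (u i) = 0 -> forall i, a i = 0.
Proof.
move=> iu h i; apply/mpolyP => al; rewrite mcoeff0.
case: (coefT_map al) => c [lc hc].
have := congr1 c h; rewrite lin0 // lin_sum //.
under eq_bigr do rewrite hc.
by move/iu => ->.
Qed.

Lemma tensor_rep0 (w : T) : exists k (a : 'I_k -> CXY) (u : 'I_k -> B),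
  w = \sum_(i < k) t (a i) (u i).
Proof.
move: w; apply: (tensor_span tT (P := fun w => exists k (a : 'I_k -> CXY) (u : 'I_k -> B),
  w = \sum_(i < k) t (a i) (u i))).
- by exists 0%N, (fun _ => 0), (fun _ => 0); rewrite big_ord0.
- move=> x y [k1 [a1 [u1 ->]]] [k2 [a2 [u2 ->]]].
  exists (k1 + k2)%N, (fun i => match split i with inl j => a1 j | inr j => a2 j end),
    (fun i => match split i with inl j => u1 j | inr j => u2 j end).
  rewrite big_split_ord /=; congr (_ + _); apply: eq_bigr => i _.
  + by move: (unsplitK (inl 'I_k2 i)) => /= ->.
  + by move: (unsplitK (inr 'I_k1 i)) => /= ->.
- move=> k x [n [a [u ->]]]; exists n, (fun i => k *: a i), u.
  rewrite scaler_sumr; apply: eq_bigr => i _.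
  by rewrite (linZ (t_lin1 tT (u i))).
- move=> a v; exists 1%N, (fun _ => a), (fun _ => v).
  by rewrite big_ord1.
Qed.

Lemma tensor_reduce k (a : 'I_k -> CXY) (u : 'I_k -> B) :
  exists k' (a' : 'I_k' -> CXY) (u' : 'I_k' -> B), indep u' /\
  \sum_(i < k) t (a i) (u i) = \sum_(i < k') t (a' i) (u' i).
Proof.
elim: k a u => [|k IH] a u.
  by exists 0%N, a, u; split => // c _ [m hm]; exfalso; rewrite ltn0 in hm.
case: (classic (indep u)) => [iu|niu]; first by exists k.+1, a, u.
have [c [hc [j cj]]] : exists c : 'I_k.+1 -> CC, \sum_i c i *: u i = 0 /\
    exists j, c j <> 0.
  apply: NNPP => H; apply: niu => c hc i; apply: NNPP => ci.
  by apply: H; exists c; split => //; exists i.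
pose a' := fun i : 'I_k => a (lift j i) - (c (lift j i) / c j) *: a j.
case: (IH a' (fun i => u (lift j i))) => k' [a'' [u' [iu' e]]].
exists k', a'', u'; split => //; rewrite -e.
rewrite (bigD1_ord j) //=.
move: hc; rewrite (bigD1_ord j) //= => hc.
have uj : u j = - \sum_(i < k) (c (lift j i) / c j) *: u (lift j i).
  apply: (@scalerI _ _ (c j)); first by apply/eqP.
  rewrite scalerN scaler_sumr; apply/eqP; rewrite -addr_eq0; apply/eqP.
  rewrite -[RHS]hc; congr (_ + _); apply: eq_bigr => i _.
  by rewrite scalerA mulrCA mulfV ?mulr1 //; apply/eqP.
rewrite uj (tN2 tT) (tsum2 tT).
rewrite /a' -sumrN -big_split /=; apply: eq_bigr => i _.
rewrite (tB1 tT) (tZ1 tT) (tZ2 tT).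
by rewrite addrC.
Qed.

Lemma tensor_rep (w : T) : exists k (a : 'I_k -> CXY) (u : 'I_k -> B),
  indep u /\ w = \sum_(i < k) t (a i) (u i).
Proof.
case: (tensor_rep0 w) => k [a [u ->]].
case: (tensor_reduce a u) => k' [a' [u' [iu e]]].
by exists k', a', u'.
Qed.

End TensorPoly.
Lemma poly_inj_roots (p : {poly CC}) (f : nat -> CC) :
  injective f -> (forall k, p.[f k] = 0) -> p = 0.
Proof.
move=> fi h; apply: (@roots_geq_poly_eq0 _ p (map f (seq.iota 0 (size p)))).
- by apply/allP => x /mapP [k _ ->]; apply/rootP/h.
- by rewrite map_inj_uniq // iota_uniq.
- by rewrite size_map size_iota.
Qed.

Lemma natr_injC : injective (fun n : nat => n%:R : CC).
Proof. by move=> m n /eqP; rewrite eqr_nat => /eqP. Qed.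

Lemma poly_eval0 (p : {poly CC}) : (forall x, p.[x] = 0) -> p = 0.
Proof. by move=> h; apply: (poly_inj_roots natr_injC). Qed.

Lemma shift_eig (h : {poly CC}) (s k : CC) : h != 0 -> s != 0 ->
  (forall y, h.[y + s] = k * h.[y]) -> k = 1.
Proof.
move=> h0 s0 e.
have E : h \Po ('X + s%:P) = k *: h.
  apply/eqP; rewrite -subr_eq0; apply/eqP; apply: poly_eval0 => x.
  by rewrite hornerD hornerN horner_comp hornerZ hornerD hornerX hornerC e subrr.
have := congr1 lead_coef E.
rewrite lead_coef_comp ?size_XaddC // lead_coefXaddC expr1n mulr1 lead_coefZ.
move=> /eqP; rewrite -[X in X == _]mul1r eq_sym -subr_eq0 -mulrBl mulf_eq0.
by rewrite lead_coef_eq0 (negbTE h0) orbF subr_eq0 => /eqP.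
Qed.

Lemma shift_inv (h : {poly CC}) (s : CC) : s != 0 ->
  (forall y, h.[y + s] = h.[y]) -> forall y, h.[y] = h.[0].
Proof.
move=> s0 e.
have hn n : h.[n%:R * s] = h.[0].
  elim: n => [|n IH]; first by rewrite mul0r.
  by rewrite -addn1 natrD mulrDl mul1r e.
have fi : injective (fun n : nat => n%:R * s).
  by move=> m n /= /(mulIf s0) /natr_injC.
have : h - h.[0]%:P = 0.
  by apply: (poly_inj_roots fi) => n; rewrite hornerD hornerN hornerC hn subrr.
move=> E y; have := congr1 (horner^~ y) E.
by rewrite /= hornerD hornerN hornerC horner0 => /eqP; rewrite subr_eq0 => /eqP.
Qed.
Definition ev2 (x y : CC) : 'I_2 -> CC := fun i => if i == ord0 then x else y.
Definition Ev (a : CXY) x y := a.@[ev2 x y].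
Definition hPP : 'I_2 -> {poly {poly CC}} := fun i => if i == ord0 then 'X else ('X)%:P.
Definition toPP (a : CXY) : {poly {poly CC}} := mmap (fun c : CC => (c%:P)%:P) hPP a.

Lemma mmap_rmorph (S S' : comRingType) (g : {rmorphism S -> S'}) (f : CC -> S)
   (h : 'I_2 -> S) (p : CXY) :
  g (mmap f h p) = mmap (g \o f) (g \o h) p.
Proof.
rewrite /mmap rmorph_sum; apply: eq_bigr => m _; rewrite rmorphM /mmap1 rmorph_prod.
by congr (_ * _); apply: eq_bigr => i _; rewrite rmorphXn.
Qed.

Lemma mmap_ext (S : comRingType) (f1 f2 : CC -> S) (h1 h2 : 'I_2 -> S) (p : CXY) :
  f1 =1 f2 -> h1 =1 h2 -> mmap f1 h1 p = mmap f2 h2 p.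
Proof.
move=> ef eh; rewrite /mmap; apply: eq_bigr => m _; rewrite ef /mmap1.
by congr (_ * _); apply: eq_bigr => i _; rewrite eh.
Qed.

Lemma toPP_eval a x y : ((toPP a).[x%:P]).[y] = Ev a x y.
Proof.
rewrite -!horner_evalE /toPP.
rewrite (mmap_rmorph (horner_eval (x%:P))) (mmap_rmorph (horner_eval y)).
rewrite /Ev /meval; apply: mmap_ext => [c|i] /=; first by rewrite !horner_evalE !hornerC.
by rewrite /hPP /ev2; case: (i == ord0); rewrite !horner_evalE ?hornerX ?hornerC ?hornerX.
Qed.

Definition sliceY a x : {poly CC} := (toPP a).[x%:P].
Lemma sliceY_eval a x y : (sliceY a x).[y] = Ev a x y.
Proof. exact: toPP_eval. Qed.

Definition sliceX a y : {poly CC} := map_poly (horner_eval y) (toPP a).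
Lemma sliceX_eval a x y : (sliceX a y).[x] = Ev a x y.
Proof.
have := horner_map (horner_eval y) (toPP a) (x%:P).
by rewrite /= !horner_evalE hornerC toPP_eval.
Qed.

Lemma toPP_coef a (m : 'X_{1..2}) : ((toPP a)`_(m ord0))`_(m (lift ord0 ord0)) = a@_m.
Proof.
rewrite {2}(mpolyE a) /toPP /mmap (coef_sum (R := {poly CC})) (coef_sum (R := CC)).
rewrite raddf_sum /=.
apply: eq_bigr => m' _.
rewrite mcoeffZ mcoeffX /mmap1 big_ord_recl big_ord1 /hPP /=.
rewrite -rmorphXn mulrCA mulrC -polyCM coefCM coefXn mulr_natr coefMn coefCM coefXn.
have -> : (m' == m) = (m ord0 == m' ord0) && (m (lift ord0 ord0) == m' (lift ord0 ord0)).
  apply/eqP/andP => [->|[/eqP e1 /eqP e2]]; first by [].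
  apply/mnmP => i; case: i => [[|[|//]] hi].
  - by rewrite (_ : Ordinal hi = ord0) //; apply: val_inj.
  - by rewrite (_ : Ordinal hi = lift ord0 ord0) //; apply: val_inj.
by case: (m ord0 == m' ord0); case: (_ == _); rewrite ?mulr1 ?mulr0.
Qed.

Lemma Ev_eq0 (a : CXY) : (forall x y, Ev a x y = 0) -> a = 0.
Proof.
move=> h.
have P0 : toPP a = 0.
  apply/polyP => i; rewrite coef0; apply: poly_eval0 => y.
  have S0 : sliceX a y = 0 by apply: poly_eval0 => x; rewrite sliceX_eval.
  by have := congr1 (fun p : {poly CC} => p`_i) S0; rewrite /sliceX coef_map /= coef0 horner_evalE.
apply/mpolyP => m; rewrite mcoeff0 -toPP_coef P0.
by rewrite coef0 coef0.
Qed.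

Lemma Ev_shift a s b x y : Ev (shiftXY s b a) x y = Ev a (x + s) (y + b).
Proof.
rewrite /Ev /shiftXY comp_mpoly_meval; apply: meval_eq => i.
case: i => [[|[|//]] hi].
- rewrite (_ : Ordinal hi = ord0) //; last by apply: val_inj.
  by rewrite (tnth_nth 0) /= mevalD mevalXU mevalC.
- rewrite (_ : Ordinal hi = lift ord0 ord0) //; last by apply: val_inj.
  by rewrite (tnth_nth 0) /= mevalD mevalXU mevalC.
Qed.

Lemma EvB a b x y : Ev (a - b) x y = Ev a x y - Ev b x y.
Proof. by rewrite /Ev mevalB. Qed.
Lemma EvZ c a x y : Ev (c *: a) x y = c * Ev a x y.
Proof. by rewrite /Ev mevalZ. Qed.
Lemma EvC c x y : Ev c%:MP x y = c.
Proof. by rewrite /Ev mevalC. Qed.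
Lemma shift_eq (a : CXY) (s lA sA l1 s1 : CC) (N : nat) : s != 0 -> l1 != 0 -> s1 != 0 ->
  (forall m : nat, (N <= m)%N -> (lA ^+ m * sA) *: a = (l1 ^+ m * s1) *: shiftXY s (- m%:R) a) ->
  (exists c, a = c%:MP) /\ (a != 0 -> lA = l1 /\ sA = s1).
Proof.
move=> s0 l10 s10 H.
case: (eqVneq a 0) => [->|a0].
  by split; [exists 0; rewrite mpolyC0 | move/eqP].
have Eq m x y : (N <= m)%N ->
    lA ^+ m * sA * Ev a x y = l1 ^+ m * s1 * Ev a (x + s) (y - m%:R).
  by move=> hm; have := congr1 (fun p => Ev p x y) (H m hm); rewrite /= !EvZ Ev_shift.
have [x0 [y0 nz]] : exists x0 y0, Ev a x0 y0 != 0.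
  apply: NNPP => hn; move/eqP: a0; apply; apply: Ev_eq0 => x y.
  by apply/eqP; apply: NNPP => hh; apply: hn; exists x, y; apply/negP.
have L0 : l1 ^+ N * s1 != 0 by rewrite mulf_neq0 // expf_neq0.
have c0 : lA ^+ N * sA != 0.
  apply/negP => /eqP c0; move/eqP: a0; apply; apply: Ev_eq0 => x y.
  have := Eq N (x - s) (y + N%:R) (leqnn N).
  rewrite c0 mul0r subrK addrK => /eqP; rewrite eq_sym mulf_eq0 (negbTE L0) /=.
  by move/eqP.
have ek x y : Ev a x (y + -1) = (lA / l1) * Ev a x y.
  have e1 := Eq N.+1 x y (leqnSn N).
  have e2 := Eq N x (y + -1) (leqnn N).
  have e3 : y - (N.+1)%:R = y + -1 - N%:R by rewrite -addn1 natrD; ring.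
  set v := Ev a x y.
  have e1' : lA * (lA ^+ N * sA * v) = l1 * (l1 ^+ N * s1 * Ev a (x + s) (y + -1 - N%:R)).
    by rewrite !mulrA -!exprS -e3.
  rewrite -e2 in e1'.
  apply: (mulfI c0); apply: (mulfI l10).
  have -> : l1 * (lA ^+ N * sA * (lA / l1 * v)) = lA * (lA ^+ N * sA * v) by field.
  by rewrite e1'; ring.
have sY : sliceY a x0 != 0.
  by apply/eqP => e; move: nz; rewrite -sliceY_eval e horner0 eqxx.
have k1 : lA / l1 = 1.
  by apply: (shift_eig sY (s := -1)) => //; [rewrite oppr_eq0 oner_eq0|move=> y; rewrite !sliceY_eval].
have lAe : lA = l1 by rewrite -[lA](divfK l10) k1 mul1r.
have cy x y : Ev a x y = Ev a x 0.
  have := @shift_inv (sliceY a x) (-1); rewrite oppr_eq0 oner_eq0 => /(_ isT).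
  move=> /(_ _ y); rewrite !sliceY_eval; apply => z.
  by rewrite !sliceY_eval ek k1 mul1r.
have ex x : Ev a (x + s) 0 = (sA / s1) * Ev a x 0.
  have := Eq N x 0 (leqnn N); rewrite (cy (x + s) (0 - N%:R)) lAe => e.
  have l1N : l1 ^+ N != 0 by rewrite expf_neq0.
  apply: (mulfI l1N); apply: (mulfI s10).
  have -> : s1 * (l1 ^+ N * (sA / s1 * Ev a x 0)) = l1 ^+ N * sA * Ev a x 0 by field.
  by rewrite e; ring.
have sX : sliceX a 0 != 0.
  by apply/eqP => e; move: nz; rewrite cy -sliceX_eval e horner0 eqxx.
have r1 : sA / s1 = 1.
  by apply: (shift_eig sX s0) => x; rewrite !sliceX_eval ex.
have sAe : sA = s1 by rewrite -[sA](divfK s10) r1 mul1r.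
have cx x : Ev a x 0 = Ev a 0 0.
  have := @shift_inv (sliceX a 0) s s0.
  move=> /(_ _ x); rewrite !sliceX_eval; apply => z.
  by rewrite !sliceX_eval ex r1 mul1r.
split=> [|_ //]; exists (Ev a 0 0).
apply/eqP; rewrite -subr_eq0; apply/eqP; apply: Ev_eq0 => x y.
by rewrite EvB EvC cy cx subrr.
Qed.
Lemma posz_exp (x : CC) (m : nat) : x ^ (m%:Z) = x ^+ m.
Proof. by []. Qed.
Lemma posz_intr (m : nat) : (m%:Z)%:~R = m%:R :> CC.
Proof. by []. Qed.
Lemma mpolyC_scale (c : CC) : c%:MP = c *: (1 : CXY).
Proof. by rewrite -mul_mpolyC mulr1. Qed.

Section GmodHelp.
Variables (V : lmodType CC) (M : gmod V).
Lemma gact0 x : gact M x 0 = 0. Proof. exact: lin0 (gact_linear M x). Qed.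
Lemma gactD x u v : gact M x (u + v) = gact M x u + gact M x v.
Proof. exact: (linD (gact_linear M x) u v). Qed.
Lemma gactZ x k u : gact M x (k *: u) = k *: gact M x u.
Proof. exact: (linZ (gact_linear M x) k u). Qed.
Lemma gact_sum x I (r : seq I) (P : pred I) F :
  gact M x (\sum_(i <- r | P i) F i) = \sum_(i <- r | P i) gact M x (F i).
Proof. exact: (lin_sum (gact_linear M x) r P F). Qed.

Lemma restr_fam : restricted M -> forall k (u : 'I_k -> V),
  exists N : nat, forall i x, (N%:Z < gdeg x)%R -> gact M x (u i) = 0.
Proof.
move=> rM; elim=> [|k IH] u.
  by exists 0%N => -[i hi]; exfalso; rewrite ltn0 in hi.
case: (IH (fun i => u (lift ord0 i))) => N1 h1.
case: (rM (u ord0)) => N0 h0.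
exists (maxn N0 N1) => i x hx.
case: (unliftP ord0 i) => [j ->|->].
- apply: h1; apply: le_lt_trans hx; rewrite lez_nat; exact: leq_maxr.
- apply: h0; apply: le_lt_trans hx; rewrite lez_nat; exact: leq_maxl.
Qed.
End GmodHelp.

Section Core.
Variables (VR VS T1 T2 : lmodType CC) (R : gmod VR) (S : gmod VS) (M1 : gmod T1) (M2 : gmod T2)
  (t1 : CXY -> VR -> T1) (t2 : CXY -> VS -> T2) (actA actB : gbasis -> CXY -> CXY).
Hypotheses (rR : restricted R) (rS : restricted S)
  (tg1 : tensor_gmod actA R M1 t1) (tg2 : tensor_gmod actB S M2 t2).
Variables (phi : T1 -> T2).
Hypotheses (lphi : linear phi) (iphi : injective phi)
  (cphi : forall x w, phi (gact M1 x w) = gact M2 x (phi w)).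

Let tT1 : is_tensor t1. Proof. by case: tg1. Qed.
Let tT2 : is_tensor t2. Proof. by case: tg2. Qed.
Let rule1 x a v : gact M1 x (t1 a v) = t1 (actA x a) v + t1 a (gact R x v).
Proof. by case: tg1 => _ ->. Qed.
Let rule2 x a v : gact M2 x (t2 a v) = t2 (actB x a) v + t2 a (gact S x v).
Proof. by case: tg2 => _ ->. Qed.

Lemma core_w (K : int -> gbasis) (lA sA l1 s1 s : CC) :
  (forall m, gdeg (K m) = m) -> s != 0 -> l1 != 0 -> s1 != 0 ->
  (forall m, actA (K m) 1 = (lA ^ m * sA) *: 1) ->
  (forall m f, actB (K m) f = (l1 ^ m * s1) *: shiftXY s (- m%:~R) f) ->
  forall v, (exists u, phi (t1 1 v) = t2 1 u) /\ (v != 0 -> lA = l1 /\ sA = s1).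
Proof.
move=> hd s0 l10 s10 hA hB v.
case: (tensor_rep tT2 (phi (t1 1 v))) => k [a [u [iu ew]]].
case: (rR v) => Nv hNv; case: (restr_fam rS u) => Nu hNu.
have key m : (maxn Nv Nu < m)%N -> forall i,
    (lA ^+ m * sA) *: a i = (l1 ^+ m * s1) *: shiftXY s (- m%:R) (a i).
  move=> hm.
  have lt Nx : (Nx <= maxn Nv Nu)%N -> (Nx%:Z < gdeg (K m))%R.
    by move=> hx; rewrite hd ltz_nat; apply: leq_ltn_trans hm.
  have e1 : gact M2 (K m) (phi (t1 1 v)) = (lA ^+ m * sA) *: phi (t1 1 v).
    rewrite -cphi rule1 hA hNv ?lt ?leq_maxl // (t02 tT1) addr0 (tZ1 tT1).
    by rewrite (linZ lphi) posz_exp.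
  have e2 : gact M2 (K m) (phi (t1 1 v)) =
      \sum_i t2 ((l1 ^+ m * s1) *: shiftXY s (- m%:R) (a i)) (u i).
    rewrite ew gact_sum; apply: eq_bigr => i _.
    by rewrite rule2 hB hNu ?lt ?leq_maxr // (t02 tT2) addr0 posz_exp posz_intr.
  have : \sum_i t2 ((lA ^+ m * sA) *: a i - (l1 ^+ m * s1) *: shiftXY s (- m%:R) (a i)) (u i) = 0.
    under eq_bigr do rewrite (tB1 tT2).
    rewrite sumrB -e2 e1 ew scaler_sumr.
    under eq_bigr do rewrite (tZ1 tT2).
    by rewrite subrr.
  move/(indep_zero tT2 iu) => h i; apply/eqP; rewrite -subr_eq0; apply/eqP; exact: h.
have sh i := @shift_eq (a i) s lA sA l1 s1 (maxn Nv Nu).+1 s0 l10 s10 (fun m hm => key m hm i).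
split.
  exists (\sum_i ((a i)@_0) *: u i).
  rewrite ew (tsum2 tT2); apply: eq_bigr => i _.
  case: (sh i) => [[c ->] _].
  by rewrite mcoeffC eqxx mulr1 (tZ2 tT2) mpolyC_scale (tZ1 tT2).
move=> v0.
have w0 : phi (t1 1 v) != 0.
  apply/eqP => e; move/eqP: v0; apply; apply: (t_inj1 tT1); apply: iphi.
  by rewrite e (lin0 lphi).
have [i ai] : exists i, a i != 0.
  apply: NNPP => hn; move/eqP: w0; apply; rewrite ew; apply: big1 => i _.
  have -> : a i = 0 by apply/eqP; apply: NNPP => hh; apply: hn; exists i; apply/negP.
  exact: (t01 tT2).
by case: (sh i) => _ /(_ ai).
Qed.


Lemma t2_inj1 x y : t2 1 x = t2 1 y -> x = y.
Proof.
move=> e; apply/eqP; rewrite -subr_eq0; apply/eqP; apply: (t_inj1 tT2).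
by rewrite (tB2 tT2) e subrr.
Qed.

Lemma core_eta (lam eta eta1 e : CC) (v : VR) (u : VS) : lam != 0 ->
  (forall m : int, actA (gH m) 1 = lam ^ m *: 'X_0) ->
  (forall m : int, actB (gH m) 1 = lam ^ m *: 'X_0) ->
  (forall m : int, actA (gL m) 1 = lam ^ m *: ('X_1 + (e * m%:~R) *: 'X_0 + (m%:~R * eta)%:MP)) ->
  (forall m : int, actB (gL m) 1 = lam ^ m *: ('X_1 + (e * m%:~R) *: 'X_0 + (m%:~R * eta1)%:MP)) ->
  phi (t1 1 v) = t2 1 u ->
  [/\ phi (t1 'X_0 v) = t2 'X_0 u, (u != 0 -> eta = eta1)
    & (eta = eta1 -> phi (t1 'X_1 v) = t2 'X_1 u)].
Proof.
move=> l0 hHA hHB hLA hLB ev.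
case: (rR v) => Nv hNv; case: (rS u) => Nu hNu.
have ltM m : (maxn Nv Nu < m)%N -> (Nv%:Z < m%:Z)%R /\ (Nu%:Z < m%:Z)%R.
  move=> hm; rewrite !ltz_nat; split; apply: leq_ltn_trans hm;
  by [apply: leq_maxl | apply: leq_maxr].
pose M := (maxn Nv Nu).+1.
have lM m : lam ^+ m != 0 by rewrite expf_neq0.
have hX : phi (t1 'X_0 v) = t2 'X_0 u.
  have := cphi (gH M) (t1 1 v); rewrite ev rule1 rule2 hHA hHB.
  case: (ltM M (leqnn _)) => h1 h2.
  rewrite hNv // hNu // (t02 tT1) (t02 tT2) !addr0 (tZ1 tT1) (tZ1 tT2) (linZ lphi).
  by rewrite posz_exp => /(scalerI (lM M)).
have hL m : (maxn Nv Nu < m)%N ->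
    phi (t1 'X_1 v) + (m%:R * eta) *: t2 1 u = t2 'X_1 u + (m%:R * eta1) *: t2 1 u.
  move=> hm; case: (ltM m hm) => h1 h2.
  have := cphi (gL m) (t1 1 v); rewrite ev rule1 rule2 hLA hLB hNv // hNu //.
  rewrite (t02 tT1) (t02 tT2) !addr0 (tZ1 tT1) (tZ1 tT2) (linZ lphi) posz_exp.
  move/(scalerI (lM m)).
  rewrite !(tD1 tT1) !(tD1 tT2) !(linD lphi) !mpolyC_scale !(tZ1 tT1) !(tZ1 tT2).
  rewrite !(linZ lphi) hX ev posz_intr.
  by move=> E; move: E; rewrite [LHS]addrAC [RHS]addrAC => /addIr.
pose W := t2 1 u.
have d : eta *: W = eta1 *: W.
  have e1 := hL M.+1 (leqnSn _); have e0 := hL M (leqnn _).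
  have sp : forall z : CC, (M.+1)%:R * z = M%:R * z + z.
    by move=> z; rewrite -addn1 natrD mulrDl mul1r.
  rewrite !sp !scalerDl !addrA e0 in e1.
  exact: (addrI _ e1).
have ee : u != 0 -> eta = eta1.
  move=> u0; apply/eqP; rewrite -subr_eq0; apply/eqP.
  have W0 : W != 0 by apply/eqP => /(t_inj1 tT2) /eqP; rewrite (negbTE u0).
  by move/eqP: d; rewrite -subr_eq0 -scalerBl scaler_eq0 (negbTE W0) orbF => /eqP.
split => // he; have := hL M (leqnn _); rewrite he.
by move/addIr.
Qed.

Lemma build_psi :
  (forall v, exists u, phi (t1 1 v) = t2 1 u) ->
  (forall v u, phi (t1 1 v) = t2 1 u ->
     phi (t1 'X_0 v) = t2 'X_0 u /\ phi (t1 'X_1 v) = t2 'X_1 u) ->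
  (forall x, actA x 1 = actB x 1) ->
  (forall x, exists c0 c1 c2, actA x 1 = c0 *: 1 + c1 *: 'X_0 + c2 *: 'X_1) ->
  exists psi : VR -> VS, [/\ linear psi, injective psi,
    (forall x v, psi (gact R x v) = gact S x (psi v)) & forall v, phi (t1 1 v) = t2 1 (psi v)].
Proof.
move=> hex hXY hAB hsp.
pose psi v := proj1_sig (constructive_indefinite_description _ (hex v)).
have hpsi v : phi (t1 1 v) = t2 1 (psi v).
  by rewrite /psi; case: constructive_indefinite_description.
exists psi; split => //.
- move=> k x y; apply: t2_inj1.
  by rewrite (tD2 tT2) (tZ2 tT2) -!hpsi (tD2 tT1) (tZ2 tT1) (linD lphi) (linZ lphi).
- move=> x y e; apply/eqP; rewrite -subr_eq0; apply/eqP; apply: (t_inj1 tT1).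
  apply: iphi; rewrite (tB2 tT1) (linB lphi) !hpsi e subrr.
  by rewrite (lin0 lphi).
- move=> x v; apply: t2_inj1.
  have := cphi x (t1 1 v); rewrite rule1 hpsi rule2 (linD lphi) hpsi -hAB.
  case: (hsp x) => c0 [c1 [c2 ->]].
  case: (hXY v (psi v) (hpsi v)) => h0 h1.
  rewrite !(tD1 tT1) !(tD1 tT2) !(tZ1 tT1) !(tZ1 tT2) !(linD lphi) !(linZ lphi) hpsi h0 h1.
  by move/addrI.
Qed.
End Core.


Lemma shift1 a b : shiftXY a b 1 = 1.
Proof. by rewrite /shiftXY comp_mpoly1. Qed.

Lemma span_form (l c d : CC) : exists c0 c1 c2,
  l *: ('X_1 + c *: 'X_0 + d%:MP) = c0 *: 1 + c1 *: 'X_0 + c2 *: ('X_1 : CXY).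
Proof.
exists (l * d), (l * c), l.
rewrite mpolyC_scale !scalerDr !scalerA.
by rewrite [LHS]addrC [X in _ + X = _]addrC addrA.
Qed.

Lemma span_X0 (l : CC) : exists c0 c1 c2,
  l *: 'X_0 = c0 *: 1 + c1 *: 'X_0 + c2 *: ('X_1 : CXY).
Proof. by exists 0, l, 0; rewrite !scale0r add0r addr0. Qed.
Lemma span_1 (l : CC) : exists c0 c1 c2,
  l *: 1 = c0 *: 1 + c1 *: 'X_0 + c2 *: ('X_1 : CXY).
Proof. by exists l, 0, 0; rewrite !scale0r !addr0. Qed.
Lemma span_0 : exists c0 c1 c2,
  0 = c0 *: 1 + c1 *: 'X_0 + c2 *: ('X_1 : CXY).
Proof. by exists 0, 0, 0; rewrite !scale0r !addr0. Qed.

Lemma oI_K l et sg m f : omegaI l et sg (gI m) f = (l ^ m * sg) *: shiftXY (-1) (- m%:~R) f.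
Proof. by rewrite /= scalerA. Qed.
Lemma oI_H l et sg m : omegaI l et sg (gH m) 1 = l ^ m *: 'X_0.
Proof. by rewrite /= shift1 mulr1. Qed.
Lemma oI_L l et sg m : omegaI l et sg (gL m) 1 =
  l ^ m *: ('X_1 + (-1 * m%:~R) *: 'X_0 + (m%:~R * et)%:MP).
Proof. by rewrite /= shift1 mul1r mulN1r scaleNr. Qed.
Lemma oI_span l et sg x : exists c0 c1 c2,
  omegaI l et sg x 1 = c0 *: 1 + c1 *: 'X_0 + c2 *: 'X_1.
Proof.
case: x => [m|m|m|m|||].
- by rewrite oI_L; apply: span_form.
- by rewrite oI_H; apply: span_X0.
- by rewrite oI_K shift1; apply: span_1.
all: by apply: span_0.
Qed.

Lemma oJ_K l et sg m f : omegaJ l et sg (gJ m) f = (l ^ m * sg) *: shiftXY 1 (- m%:~R) f.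
Proof. by rewrite /= scalerA. Qed.
Lemma oJ_H l et sg m : omegaJ l et sg (gH m) 1 = l ^ m *: 'X_0.
Proof. by rewrite /= shift1 mulr1. Qed.
Lemma oJ_L l et sg m : omegaJ l et sg (gL m) 1 =
  l ^ m *: ('X_1 + (1 * m%:~R) *: 'X_0 + (m%:~R * et)%:MP).
Proof. by rewrite /= shift1 mul1r mul1r. Qed.
Lemma oJ_span l et sg x : exists c0 c1 c2,
  omegaJ l et sg x 1 = c0 *: 1 + c1 *: 'X_0 + c2 *: 'X_1.
Proof.
case: x => [m|m|m|m|||].
- by rewrite oJ_L; apply: span_form.
- by rewrite oJ_H; apply: span_X0.
- by apply: span_0.
- by rewrite oJ_K shift1; apply: span_1.
all: by apply: span_0.
Qed.
Lemma forward (Om : CC -> CC -> CC -> gbasis -> CXY -> CXY) (K : int -> gbasis) (e s : CC) :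
  s != 0 -> (forall m, gdeg (K m) = m) ->
  (forall l et sg m f, Om l et sg (K m) f = (l ^ m * sg) *: shiftXY s (- m%:~R) f) ->
  (forall l et sg m, Om l et sg (gH m) 1 = l ^ m *: 'X_0) ->
  (forall l et sg m, Om l et sg (gL m) 1 =
     l ^ m *: ('X_1 + (e * m%:~R) *: 'X_0 + (m%:~R * et)%:MP)) ->
  (forall l et sg x, exists c0 c1 c2, Om l et sg x 1 = c0 *: 1 + c1 *: 'X_0 + c2 *: 'X_1) ->
  forall (lam eta sig lam1 eta1 sig1 : CC), lam != 0 -> lam1 != 0 -> sig != 0 -> sig1 != 0 ->
  forall (VR VS : lmodType CC) (R : gmod VR) (S : gmod VS),
  restricted R -> irreducible R -> restricted S ->
  forall (T1 T2 : lmodType CC) (M1 : gmod T1) (M2 : gmod T2)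
    (t1 : CXY -> VR -> T1) (t2 : CXY -> VS -> T2),
  tensor_gmod (Om lam eta sig) R M1 t1 -> tensor_gmod (Om lam1 eta1 sig1) S M2 t2 ->
  gmod_iso M1 M2 -> [/\ lam = lam1, eta = eta1, sig = sig1 & gmod_iso R S].
Proof.
move=> s0 hd hK hH hL hsp lam eta sig lam1 eta1 sig1 l0 l10 sg0 sg10 VR VS R S rR iR rS.
move=> T1 T2 M1 M2 t1 t2 tg1 tg2 [phi [lphi [g gK Kg] cphi]].
case: iR => [[v0 v00] _].
have iphi : injective phi := can_inj gK.
have lg : linear g by move=> k x y; apply: iphi; rewrite Kg lphi !Kg.
have ig : injective g := can_inj Kg.
have cg x w : g (gact M2 x w) = gact M1 x (g w).
  by apply: iphi; rewrite Kg cphi Kg.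
have hA l et sg m : Om l et sg (K m) 1 = (l ^ m * sg) *: 1 by rewrite hK shift1.
have tT1 : is_tensor t1 by case: tg1.
have tT2 : is_tensor t2 by case: tg2.
have [_ /(_ v00) [el es]] := core_w rR rS tg1 tg2 lphi iphi cphi hd s0 l10 sg10
  (hA lam eta sig) (hK lam1 eta1 sig1) v0.
subst lam1 sig1.
have ex1 v := (core_w rR rS tg1 tg2 lphi iphi cphi hd s0 l10 sg10
  (hA lam eta sig) (hK lam eta1 sig) v).1.
case: (ex1 v0) => u0 e0.
have u00 : u0 != 0.
  apply/eqP => u0e; move/eqP: v00; apply; apply: (t_inj1 tT1); apply: iphi.
  by rewrite e0 u0e (t02 tT2) (lin0 lphi).
have [_ /(_ u00) ee _] := core_eta rR rS tg1 tg2 lphi cphi l0 (hH lam eta sig)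
  (hH lam eta1 sig) (hL lam eta sig) (hL lam eta1 sig) e0.
subst eta1.
have hXY v u : phi (t1 1 v) = t2 1 u ->
    phi (t1 'X_0 v) = t2 'X_0 u /\ phi (t1 'X_1 v) = t2 'X_1 u.
  move=> e1; case: (core_eta rR rS tg1 tg2 lphi cphi l0 (hH lam eta sig)
    (hH lam eta sig) (hL lam eta sig) (hL lam eta sig) e1) => h0 _ h1.
  by split => //; apply: h1.
have [psi [lpsi ipsi cpsi hpsi]] :=
  build_psi tg1 tg2 lphi iphi cphi ex1 hXY (fun x => erefl) (hsp lam eta sig).
have ex2 u := (core_w rS rR tg2 tg1 lg ig cg hd s0 l0 sg0
  (hA lam eta sig) (hK lam eta sig) u).1.
have hXY2 u v : g (t2 1 u) = t1 1 v ->
    g (t2 'X_0 u) = t1 'X_0 v /\ g (t2 'X_1 u) = t1 'X_1 v.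
  move=> e1; case: (core_eta rS rR tg2 tg1 lg cg l0 (hH lam eta sig)
    (hH lam eta sig) (hL lam eta sig) (hL lam eta sig) e1) => h0 _ h1.
  by split => //; apply: h1.
have [psi' [_ _ _ hpsi']] :=
  build_psi tg2 tg1 lg ig cg ex2 hXY2 (fun x => erefl) (hsp lam eta sig).
have pp u : psi (psi' u) = u.
  by apply: (t2_inj1 tg2); rewrite -hpsi -hpsi' Kg.
split => //; exists psi; split => //.
by exists psi' => [v|u]; [apply: ipsi; rewrite pp | apply: pp].
Qed.

Lemma backward (act : gbasis -> CXY -> CXY) (VR VS T1 T2 : lmodType CC) (R : gmod VR)
  (S : gmod VS) (M1 : gmod T1) (M2 : gmod T2) (t1 : CXY -> VR -> T1) (t2 : CXY -> VS -> T2) :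
  tensor_gmod act R M1 t1 -> tensor_gmod act S M2 t2 -> gmod_iso R S -> gmod_iso M1 M2.
Proof.
move=> [tT1 r1] [tT2 r2] [f [lf [g gK Kg] cf]].
have ifn : injective f := can_inj gK.
have lg : linear g by move=> k x y; apply: ifn; rewrite Kg lf !Kg.
have bl1 : bilinearP (fun a v => t2 a (f v)).
  split => [a|v]; [exact: lin_comp (t_lin2 tT2 a) lf | exact: (t_lin1 tT2 (f v))].
have bl2 : bilinearP (fun a u => t1 a (g u)).
  split => [a|u]; [exact: lin_comp (t_lin2 tT1 a) lg | exact: (t_lin1 tT1 (g u))].
case: (tT1) => _ /(_ T2 _ bl1) [Phi [lPhi hPhi _]].
case: (tT2) => _ /(_ T1 _ bl2) [Psi [lPsi hPsi _]].
have lid1 : linear (@id T1) by [].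
have lid2 : linear (@id T2) by [].
have PsiPhi := tensor_ext tT1 (lin_comp lPsi lPhi) lid1
  (fun a v => etrans (congr1 Psi (hPhi a v)) (etrans (hPsi a (f v)) (congr1 (t1 a) (gK v)))).
have PhiPsi := tensor_ext tT2 (lin_comp lPhi lPsi) lid2
  (fun a u => etrans (congr1 Phi (hPsi a u)) (etrans (hPhi a (g u)) (congr1 (t2 a) (Kg u)))).
exists Phi; split => //; first by exists Psi.
move=> x w.
have := tensor_ext tT1 (lin_comp lPhi (gact_linear M1 x)) (lin_comp (gact_linear M2 x) lPhi).
apply => a v; rewrite r1 (linD lPhi) !hPhi r2 cf //.
Qed.
Unset Implicit Arguments.

Theorem theorem4p3 (lam lam1 sig sig1 eta eta1 : CC) :
  lam != 0 -> lam1 != 0 -> sig != 0 -> sig1 != 0 ->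
  forall (VR VS : lmodType CC) (R : gmod VR) (S : gmod VS),
  restricted R -> irreducible R -> restricted S -> irreducible S ->
  [/\ (forall (T1 T2 : lmodType CC) (M1 : gmod T1) (M2 : gmod T2)
          (t1 : CXY -> VR -> T1) (t2 : CXY -> VS -> T2),
          tensor_gmod (omegaI lam eta sig) R M1 t1 ->
          tensor_gmod (omegaI lam1 eta1 sig1) S M2 t2 ->
          (gmod_iso M1 M2 <->
           [/\ lam = lam1, eta = eta1, sig = sig1 & gmod_iso R S])),
      (forall (T1 T2 : lmodType CC) (M1 : gmod T1) (M2 : gmod T2)
          (t1 : CXY -> VR -> T1) (t2 : CXY -> VS -> T2),
          tensor_gmod (omegaJ lam eta sig) R M1 t1 ->
          tensor_gmod (omegaJ lam1 eta1 sig1) S M2 t2 ->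
          (gmod_iso M1 M2 <->
           [/\ lam = lam1, eta = eta1, sig = sig1 & gmod_iso R S]))
    & (forall (T1 T2 : lmodType CC) (M1 : gmod T1) (M2 : gmod T2)
          (t1 : CXY -> VR -> T1) (t2 : CXY -> VS -> T2),
          tensor_gmod (omegaI lam eta sig) R M1 t1 ->
          tensor_gmod (omegaJ lam1 eta1 sig1) S M2 t2 ->
          ~ gmod_iso M1 M2)].
Proof.
move=> l0 l10 s0 s10 VR VS R S rR iR rS iS.
have m1 : (-1 : CC) != 0 by rewrite oppr_eq0 oner_eq0.
split.
- move=> T1 T2 M1 M2 t1 t2 tg1 tg2; split.
  + exact: (@forward omegaI gI (-1) (-1) m1 (fun m => erefl) oI_K oI_H oI_L oI_span
      lam eta sig lam1 eta1 sig1 l0 l10 s0 s10 VR VS R S rR iR rS T1 T2 M1 M2 t1 t2 tg1 tg2).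
  + by case=> el ee es iso; subst lam1 eta1 sig1; exact: (backward tg1 tg2 iso).
- move=> T1 T2 M1 M2 t1 t2 tg1 tg2; split.
  + exact: (@forward omegaJ gJ 1 1 (oner_neq0 _) (fun m => erefl) oJ_K oJ_H oJ_L oJ_span
      lam eta sig lam1 eta1 sig1 l0 l10 s0 s10 VR VS R S rR iR rS T1 T2 M1 M2 t1 t2 tg1 tg2).
  + by case=> el ee es iso; subst lam1 eta1 sig1; exact: (backward tg1 tg2 iso).
- move=> T1 T2 M1 M2 t1 t2 tg1 tg2 [phi [lphi [g gK Kg] cphi]].
  case: iR => [[v0 v00] _].
  have hA (m : int) : omegaI lam eta sig (gJ m) 1 = (0 ^ m * 0) *: 1.
    by rewrite mulr0 scale0r.
  have [_ /(_ v00) [e _]] := core_w rR rS tg1 tg2 lphi (can_inj gK) cphi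
    (K := gJ) (fun m => erefl) (oner_neq0 _) l10 s10 hA (oJ_K lam1 eta1 sig1) v0.
  by move/eqP: l10; rewrite -e.
Qed.
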